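(* Let $k\ge1$ and $g_k(z):=-\log f_k(e^{-z})$ for $z>0$. Then: (a) $g_k(z)\sim e^{-kz}$ as $z\to\infty$; (b) $g_k(z)\sim\frac1k\log z^{-1}$ as $z\to0^+$; (c) $g_k$ is differentiable on $(0,\infty)$ and $g_k'(z)\sim-\frac{1}{kz}$ as $z\to0^+$.
   Context: For an integer $k\ge1$, $f_k:[0,1]\to[0,1]$ denotes the unique decreasing function satisfying $f_k(x)^k-f_k(x)^{k+1}=x^k-x^{k+1}$ for all $x\in[0,1]$; it is continuous with $f_k(0)=1$, $f_k(1)=0$. The notation $F\sim G$ means $F/G\to1$. *)

(* Defs.v *)
From Stdlib Require Import Reals.
Open Scope R_scope.

(* f is "the" function f_k of the paper: a decreasing map [0,1] -> [0,1]
   with f(x)^k - f(x)^(k+1) = x^k - x^(k+1) for all x in [0,1]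
   (such an f is unique, so quantifying over it is faithful). *)
Definition is_fk (k : nat) (f : R -> R) : Prop :=
  (forall x, 0 <= x <= 1 -> 0 <= f x <= 1) /\
  (forall x y, 0 <= x <= 1 -> 0 <= y <= 1 -> x < y -> f y <= f x) /\
  (forall x, 0 <= x <= 1 -> f x ^ k - f x ^ (k + 1) = x ^ k - x ^ (k + 1)).

Definition gk (f : R -> R) (z : R) : R := - ln (f (exp (- z))).

Definition equiv_at_infty (F G : R -> R) : Prop :=
  forall eps, 0 < eps -> exists M, forall z, M < z -> Rabs (F z / G z - 1) < eps.

Definition equiv_at_0plus (F G : R -> R) : Prop :=
  forall eps, 0 < eps -> exists d, 0 < d /\
    forall z, 0 < z < d -> Rabs (F z / G z - 1) < eps.

(* Main.v *)
Require Import Defs.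
From Stdlib Require Import Reals Lra Lia.
Open Scope R_scope.


Definition h (k : nat) (t : R) : R := t ^ k - t ^ (k + 1).
Definition hp (k : nat) (t : R) : R := INR k * t ^ (pred k) - INR (k + 1) * t ^ k.
Definition x0 (k : nat) : R := INR k / INR (k + 1).

Lemma INRk1_pos k : 0 < INR (k + 1).
Proof. rewrite Nat.add_1_r. apply lt_0_INR. lia. Qed.

Lemma x0_bounds k : (1 <= k)%nat -> 0 < x0 k < 1.
Proof.
  intros Hk. unfold x0. pose proof (INRk1_pos k).
  assert (0 < INR k) by (apply lt_0_INR; lia).
  assert (INR (k+1) = INR k + 1) by (rewrite plus_INR; simpl; ring).
  split.
  - apply Rdiv_lt_0_compat; lra.
  - apply (Rmult_lt_reg_r (INR (k+1))); auto. unfold Rdiv.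
    rewrite Rmult_assoc, Rinv_l; lra.
Qed.

Lemma h_deriv k t : derivable_pt_lim (h k) t (hp k t).
Proof.
  unfold h, hp.
  apply (derivable_pt_lim_minus (fun y => y ^ k) (fun y => y ^ (k+1))).
  - apply derivable_pt_lim_pow.
  - replace (t ^ k) with (t ^ (pred (k+1))) by (f_equal; lia). apply derivable_pt_lim_pow.
Qed.

Lemma hp_factor k t : (1 <= k)%nat -> hp k t = t ^ (pred k) * (INR k - INR (k+1) * t).
Proof.
  intros Hk. unfold hp. destruct k as [|m]; [lia|]. simpl pred. simpl (t ^ S m). ring.
Qed.

Lemma hp_pos k t : (1 <= k)%nat -> 0 < t < x0 k -> 0 < hp k t.
Proof.
  intros Hk Ht. rewrite hp_factor by auto. apply Rmult_lt_0_compat.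
  - apply pow_lt; lra.
  - pose proof (INRk1_pos k). unfold x0 in Ht.
    assert (INR (k+1) * t < INR (k+1) * (INR k / INR (k+1))) by (apply Rmult_lt_compat_l; lra).
    replace (INR (k+1) * (INR k / INR (k+1))) with (INR k) in H0 by (field; lra). lra.
Qed.

Lemma hp_neg k t : (1 <= k)%nat -> x0 k < t -> hp k t < 0.
Proof.
  intros Hk Ht. pose proof (x0_bounds k Hk). rewrite hp_factor by auto.
  assert (0 < t ^ pred k) by (apply pow_lt; lra).
  pose proof (INRk1_pos k). unfold x0 in Ht.
  assert (INR (k+1) * (INR k / INR (k+1)) < INR (k+1) * t) by (apply Rmult_lt_compat_l; lra).
  replace (INR (k+1) * (INR k / INR (k+1))) with (INR k) in H2 by (field; lra).
  assert (0 < t ^ pred k * (INR (k+1) * t - INR k)) by (apply Rmult_lt_0_compat; lra).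
  nra.
Qed.

Lemma h_derivable k : derivable (h k).
Proof. intros t. exists (hp k t). apply h_deriv. Qed.

Lemma h_incr k : (1 <= k)%nat -> forall a b, 0 <= a -> b <= x0 k -> a < b -> h k a < h k b.
Proof.
  intros Hk a b Ha Hb Hab.
  pose proof (x0_bounds k Hk).
  apply (derive_increasing_interv 0 (x0 k) (h k) (h_derivable k)); try lra.
  intros t Ht. rewrite (derive_pt_eq_0 _ _ _ _ (h_deriv k t)). apply hp_pos; auto.
Qed.

Lemma mh_deriv k t : derivable_pt_lim (fun y => - h k y) t (- hp k t).
Proof. apply (derivable_pt_lim_opp (h k)). apply h_deriv. Qed.

Lemma h_decr k : (1 <= k)%nat -> forall a b, x0 k <= a -> b <= 1 -> a < b -> h k b < h k a.
Proof.
  intros Hk a b Ha Hb Hab.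
  assert (pr : derivable (fun y => - h k y)) by (intro t; exists (- hp k t); apply mh_deriv).
  enough (- h k a < - h k b) by lra.
  pose proof (x0_bounds k Hk).
  apply (derive_increasing_interv (x0 k) 1 (fun y => - h k y) pr); try lra.
  intros t Ht. rewrite (derive_pt_eq_0 _ _ _ _ (mh_deriv k t)).
    pose proof (hp_neg k t Hk (proj1 Ht)). lra.
Qed.

Lemma h_inj_left k : (1 <= k)%nat -> forall a b, 0 <= a <= x0 k -> 0 <= b <= x0 k -> h k a = h k b -> a = b.
Proof.
  intros Hk a b Ha Hb E. destruct (Rtotal_order a b) as [H|[H|H]]; auto.
  - pose proof (h_incr k Hk a b); lra.
  - pose proof (h_incr k Hk b a); lra.
Qed.

Lemma h_inj_right k : (1 <= k)%nat -> forall a b, x0 k <= a <= 1 -> x0 k <= b <= 1 -> h k a = h k b -> a = b.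
Proof.
  intros Hk a b Ha Hb E. destruct (Rtotal_order a b) as [H|[H|H]]; auto.
  - pose proof (h_decr k Hk a b); lra.
  - pose proof (h_decr k Hk b a); lra.
Qed.



Lemma fk_eq k f x : is_fk k f -> 0 <= x <= 1 -> h k (f x) = h k x.
Proof. intros [_ [_ E]] Hx. unfold h. apply E; auto. Qed.

Lemma fk_range k f x : is_fk k f -> 0 <= x <= 1 -> 0 <= f x <= 1.
Proof. intros [R _] Hx. auto. Qed.

Lemma fk_decr k f x y : is_fk k f -> 0 <= x <= 1 -> 0 <= y <= 1 -> x <= y -> f y <= f x.
Proof. intros [_ [D _]] Hx Hy Hxy. destruct (Req_dec x y) as [->|Hne]; [lra|]. apply D; auto; lra. Qed.

Lemma f_side_l k f x : (1 <= k)%nat -> is_fk k f -> 0 <= x <= x0 k -> x0 k <= f x.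
Proof.
  intros Hk Hf Hx. pose proof (x0_bounds k Hk).
  destruct (Rle_dec (x0 k) (f x)) as [|Hn]; auto. exfalso.
  assert (Hx1 : 0 <= x <= 1) by lra.
  pose proof (fk_range k f x Hf Hx1). pose proof (fk_eq k f x Hf Hx1).
  assert (E : f x = x) by (apply (h_inj_left k Hk); auto; lra).
  destruct (Req_dec x (x0 k)) as [Ex|Ex]; [lra|].
  set (b := (x + x0 k)/2).
  assert (Hb : 0 <= b <= 1) by (unfold b; lra).
  pose proof (fk_decr k f x b Hf Hx1 Hb ltac:(unfold b; lra)).
  pose proof (fk_range k f b Hf Hb). pose proof (fk_eq k f b Hf Hb).
  assert (f b = b) by (apply (h_inj_left k Hk); auto; unfold b in *; lra).
  unfold b in *; lra.
Qed.

Lemma f_side_r k f x : (1 <= k)%nat -> is_fk k f -> x0 k <= x <= 1 -> f x <= x0 k.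
Proof.
  intros Hk Hf Hx. pose proof (x0_bounds k Hk).
  destruct (Rle_dec (f x) (x0 k)) as [|Hn]; auto. exfalso.
  assert (Hx1 : 0 <= x <= 1) by lra.
  pose proof (fk_range k f x Hf Hx1). pose proof (fk_eq k f x Hf Hx1).
  assert (E : f x = x) by (apply (h_inj_right k Hk); auto; lra).
  destruct (Req_dec x (x0 k)) as [Ex|Ex]; [lra|].
  set (b := (x + x0 k)/2).
  assert (Hb : 0 <= b <= 1) by (unfold b; lra).
  pose proof (fk_decr k f b x Hf Hb Hx1 ltac:(unfold b; lra)).
  pose proof (fk_range k f b Hf Hb). pose proof (fk_eq k f b Hf Hb).
  assert (f b = b) by (apply (h_inj_right k Hk); auto; unfold b in *; lra).
  unfold b in *; lra.
Qed.

Lemma f_invol k f c : (1 <= k)%nat -> is_fk k f -> 0 <= c <= 1 -> f (f c) = c.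
Proof.
  intros Hk Hf Hc. pose proof (fk_range k f c Hf Hc) as R1.
  pose proof (fk_range k f (f c) Hf R1) as R2.
  pose proof (fk_eq k f c Hf Hc). pose proof (fk_eq k f (f c) Hf R1).
  destruct (Rle_dec c (x0 k)).
  - pose proof (f_side_l k f c Hk Hf ltac:(lra)).
    pose proof (f_side_r k f (f c) Hk Hf ltac:(lra)).
    apply (h_inj_left k Hk); try lra; congruence.
  - pose proof (f_side_r k f c Hk Hf ltac:(lra)).
    pose proof (f_side_l k f (f c) Hk Hf ltac:(lra)).
    apply (h_inj_right k Hk); try lra; congruence.
Qed.

Lemma f_inj k f a b : (1 <= k)%nat -> is_fk k f -> 0 <= a <= 1 -> 0 <= b <= 1 -> f a = f b -> a = b.
Proof.
  intros Hk Hf Ha Hb E. rewrite <- (f_invol k f a), <- (f_invol k f b); auto. congruence.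
Qed.

Lemma f_x0 k f : (1 <= k)%nat -> is_fk k f -> f (x0 k) = x0 k.
Proof.
  intros Hk Hf. pose proof (x0_bounds k Hk).
  pose proof (f_side_l k f (x0 k) Hk Hf ltac:(lra)).
  pose proof (f_side_r k f (x0 k) Hk Hf ltac:(lra)). lra.
Qed.

Lemma f_pos k f x : (1 <= k)%nat -> is_fk k f -> 0 < x < 1 -> 0 < f x < 1.
Proof.
  intros Hk Hf Hx. assert (Hx1 : 0 <= x <= 1) by lra.
  pose proof (fk_range k f x Hf Hx1).
  assert (F0 : f 0 = 1).
  { pose proof (f_side_l k f 0 Hk Hf ltac:(pose proof (x0_bounds k Hk); lra)) as S0.
    pose proof (fk_eq k f 0 Hf ltac:(lra)) as E0. pose proof (fk_range k f 0 Hf ltac:(lra)) as R0.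
    unfold h in *. destruct (Req_dec (f 0) 1) as [|N]; auto. exfalso.
    replace (0 ^ k) with 0 in E0 by (destruct k; [lia|simpl; ring]).
    replace (0 ^ (k+1)) with 0 in E0 by (rewrite Nat.add_1_r; simpl; ring).
    pose proof (x0_bounds k Hk).
    assert (0 < f 0 ^ k) by (apply pow_lt; lra).
    rewrite pow_add in E0. simpl in E0.
    assert (f 0 ^ k * (1 - f 0) > 0) by (apply Rmult_lt_0_compat; lra). nra. }
  assert (f 1 = 0) by (rewrite <- F0; apply (f_invol k f 0); auto; lra).
  split.
  - destruct (Req_dec (f x) 0); [|lra]. exfalso.
    assert (x = 1) by (apply (f_inj k f); auto; lra). lra.
  - destruct (Req_dec (f x) 1); [|lra]. exfalso.
    assert (x = 0) by (apply (f_inj k f); auto; lra). lra.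
Qed.

Lemma f_cont k f x : (1 <= k)%nat -> is_fk k f -> 0 < x < 1 ->
  forall eps, 0 < eps -> exists d, 0 < d /\ forall t, Rabs (t - x) < d -> Rabs (f t - f x) < eps.
Proof.
  intros Hk Hf Hx eps He.
  pose proof (f_pos k f x Hk Hf Hx) as Fx.
  set (c := Rmax 0 (f x - eps/2)).
  assert (Hc : 0 <= c <= 1 /\ c < f x /\ f x - eps/2 <= c).
  { unfold c; unfold Rmax; destruct (Rle_dec 0 (f x - eps/2)); lra. }
  set (c' := Rmin 1 (f x + eps/2)).
  assert (Hc' : 0 <= c' <= 1 /\ f x < c' /\ c' <= f x + eps/2).
  { unfold c'; unfold Rmin; destruct (Rle_dec 1 (f x + eps/2)); lra. }
  destruct Hc as [Hc1 [Hc2 Hc3]]. destruct Hc' as [Hc1' [Hc2' Hc3']].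
  set (t1 := f c). set (t2 := f c').
  assert (R1 : 0 <= t1 <= 1) by (unfold t1, t2; apply (fk_range k f); auto; lra).
  assert (R2 : 0 <= t2 <= 1) by (unfold t1, t2; apply (fk_range k f); auto; lra).
  assert (E1 : f t1 = c) by (unfold t1, t2; apply (f_invol k f); auto; lra).
  assert (E2 : f t2 = c') by (unfold t1, t2; apply (f_invol k f); auto; lra).
  assert (T1 : x < t1).
  { destruct (Rlt_dec x t1); auto. exfalso.
    pose proof (fk_decr k f t1 x Hf R1 ltac:(lra) ltac:(lra)). lra. }
  assert (T2 : t2 < x).
  { destruct (Rlt_dec t2 x); auto. exfalso.
    pose proof (fk_decr k f x t2 Hf ltac:(lra) R2 ltac:(lra)). lra. }
  exists (Rmin (t1 - x) (x - t2)). split.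
  - apply Rmin_glb_lt; lra.
  - intros t Ht. assert (t2 < t < t1).
    { pose proof (Rmin_l (t1 - x) (x - t2)). pose proof (Rmin_r (t1 - x) (x - t2)).
      apply Rabs_def2 in Ht. lra. }
    destruct (Rle_dec x t).
    + pose proof (fk_decr k f x t Hf ltac:(lra) ltac:(lra) r).
      pose proof (fk_decr k f t t1 Hf ltac:(lra) R1 ltac:(lra)).
      apply Rabs_def1; lra.
    + pose proof (fk_decr k f t x Hf ltac:(lra) ltac:(lra) ltac:(lra)).
      pose proof (fk_decr k f t2 t Hf R2 ltac:(lra) ltac:(lra)).
      apply Rabs_def1; lra.
Qed.


Lemma lim_of_deriv F x l : derivable_pt_lim F x l ->
  limit1_in (fun t => (F t - F x) / (t - x)) (fun t => t <> x) l x.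
Proof.
  intros H eps He. destruct (H eps He) as [d Hd].
  exists d. split; [apply cond_pos|].
  intros t [Ht1 Ht2]. simpl in *. unfold R_dist in *.
  specialize (Hd (t - x) ltac:(lra) Ht2).
  replace (x + (t - x)) with t in Hd by ring. auto.
Qed.

Lemma deriv_of_lim F x l :
  limit1_in (fun t => (F t - F x) / (t - x)) (fun t => t <> x) l x ->
  derivable_pt_lim F x l.
Proof.
  intros H eps He. destruct (H eps He) as [d [Hd1 Hd2]].
  exists (mkposreal d Hd1). intros u Hu1 Hu2. simpl in *.
  specialize (Hd2 (x + u)). simpl in Hd2. unfold R_dist in Hd2.
  replace (x + u - x) with u in Hd2 by ring. apply Hd2. split; auto; lra.
Qed.

Lemma limit_local_ext F G (D1 D2 : R -> Prop) l x r :
  limit1_in F D1 l x -> 0 < r ->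
  (forall t, D2 t -> Rabs (t - x) < r -> D1 t /\ F t = G t) ->
  limit1_in G D2 l x.
Proof.
  intros H Hr E eps He. destruct (H eps He) as [d [Hd1 Hd2]].
  exists (Rmin d r). split; [apply Rmin_glb_lt; lra|].
  intros t [Ht1 Ht2]. simpl in *. unfold R_dist in *.
  pose proof (Rmin_l d r). pose proof (Rmin_r d r).
  destruct (E t Ht1 ltac:(lra)) as [E1 E2]. rewrite <- E2.
  apply Hd2. simpl; unfold R_dist; split; auto; lra.
Qed.

Lemma f_lim k f x : (1 <= k)%nat -> is_fk k f -> 0 < x < 1 ->
  limit1_in f (fun t => t <> x) (f x) x.
Proof.
  intros Hk Hf Hx eps He. destruct (f_cont k f x Hk Hf Hx eps He) as [d [Hd1 Hd2]].
  exists d. split; auto. intros t [_ Ht]. simpl in *. unfold R_dist in *. auto.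
Qed.

Definition x0' := x0.

Lemma f_deriv_gen k f x : (1 <= k)%nat -> is_fk k f -> 0 < x < 1 -> x <> x0 k ->
  derivable_pt_lim f x (hp k x / hp k (f x)).
Proof.
  intros Hk Hf Hx Hne. pose proof (x0_bounds k Hk) as X0.
  pose proof (f_pos k f x Hk Hf Hx) as Fx.
  set (y := f x).
  assert (Hy : hp k y <> 0).
  { destruct (Rlt_dec x (x0 k)).
    - pose proof (f_side_l k f x Hk Hf ltac:(lra)).
      assert (y <> x0 k).
      { intro E. apply Hne. apply (f_inj k f); auto; try lra. fold y. rewrite E, f_x0; auto. }
      pose proof (hp_neg k y Hk ltac:(unfold y in *; lra)). lra.
    - pose proof (f_side_r k f x Hk Hf ltac:(lra)).
      assert (y <> x0 k).
      { intro E. apply Hne. apply (f_inj k f); auto; try lra. fold y. rewrite E, f_x0; auto. }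
      pose proof (hp_pos k y Hk ltac:(unfold y in *; lra)). lra. }
  assert (Hr : exists r, 0 < r /\ forall t, Rabs (t - x) < r -> 0 < t < 1 /\ (t <> x -> h k t <> h k x)).
  { destruct (Rlt_dec x (x0 k)).
    - exists (Rmin x (x0 k - x)). split; [apply Rmin_glb_lt; lra|].
      intros t Ht. pose proof (Rmin_l x (x0 k - x)). pose proof (Rmin_r x (x0 k - x)).
      apply Rabs_def2 in Ht. split; [lra|]. intros Htx E. apply Htx.
      apply (h_inj_left k Hk); lra.
    - exists (Rmin (x - x0 k) (1 - x)). split; [apply Rmin_glb_lt; lra|].
      intros t Ht. pose proof (Rmin_l (x - x0 k) (1 - x)). pose proof (Rmin_r (x - x0 k) (1 - x)).
      apply Rabs_def2 in Ht. assert (x0 k < x) by lra. split; [lra|]. intros Htx E. apply Htx.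
      apply (h_inj_right k Hk); lra. }
  destruct Hr as [r [Hr1 Hr2]].
  apply deriv_of_lim.
  pose proof (lim_of_deriv _ _ _ (h_deriv k x)) as L1.
  pose proof (lim_of_deriv _ _ _ (h_deriv k y)) as L2.
  pose proof (f_lim k f x Hk Hf Hx) as L3.
  pose proof (limit_comp _ _ _ _ _ _ _ L3 L2) as L4.
  assert (L5 : limit1_in (fun t => (h k (f t) - h k y) / (f t - y)) (fun t => t <> x) (hp k y) x).
  { apply (limit_local_ext _ _ _ _ _ _ r L4 Hr1).
    intros t Ht1 Ht2. split; auto. split; auto.
    destruct (Hr2 t Ht2) as [Ht3 _]. intro E. apply Ht1. apply (f_inj k f); auto; lra. }
  pose proof (limit_mul _ _ _ _ _ _ L1 (limit_inv _ _ _ _ L5 Hy)) as L6.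
  apply (limit_local_ext _ _ _ _ _ _ r L6 Hr1).
  intros t Ht1 Ht2. split; auto.
  destruct (Hr2 t Ht2) as [Ht3 Ht4]. specialize (Ht4 Ht1).
  assert (Hft : f t <> y).
  { intro E. apply Ht1. apply (f_inj k f); auto; lra. }
  unfold y. rewrite (fk_eq k f t Hf ltac:(lra)), (fk_eq k f x Hf ltac:(lra)).
  fold y. field. repeat split; try lra.
Qed.


Definition hpp (k : nat) (t : R) : R :=
  INR k * (INR (pred k) * t ^ (pred (pred k))) - INR (k + 1) * (INR k * t ^ (pred k)).

Lemma hp_deriv k t : derivable_pt_lim (hp k) t (hpp k t).
Proof.
  unfold hp, hpp.
  apply (derivable_pt_lim_minus (fun y => INR k * y ^ pred k) (fun y => INR (k+1) * y ^ k)).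
  - apply (derivable_pt_lim_scal (fun y => y ^ pred k)). apply derivable_pt_lim_pow.
  - apply (derivable_pt_lim_scal (fun y => y ^ k)). apply derivable_pt_lim_pow.
Qed.

Lemma hp_x0 k : (1 <= k)%nat -> hp k (x0 k) = 0.
Proof.
  intros Hk. rewrite hp_factor by auto. unfold x0. pose proof (INRk1_pos k).
  replace (INR k - INR (k+1) * (INR k / INR (k+1))) with 0 by (field; lra). ring.
Qed.

Lemma hpp_x0 k : (1 <= k)%nat -> hpp k (x0 k) < 0.
Proof.
  intros Hk. pose proof (x0_bounds k Hk) as X. unfold hpp.
  assert (E : INR (k+1) * x0 k = INR k) by (unfold x0; pose proof (INRk1_pos k); field; lra).
  destruct k as [|m]; [lia|]. simpl pred.
  destruct m as [|n].
  - simpl. lra.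
  - simpl pred. replace (x0 (S (S n)) ^ S n) with (x0 (S (S n)) ^ n * x0 (S (S n))) by (simpl; ring).
    assert (0 < x0 (S (S n)) ^ n) by (apply pow_lt; lra).
    replace (INR (S (S n)) * (INR (S n) * x0 (S (S n)) ^ n) -
      INR (S (S n) + 1) * (INR (S (S n)) * (x0 (S (S n)) ^ n * x0 (S (S n)))))
      with (INR (S (S n)) * x0 (S (S n)) ^ n * (INR (S n) - INR (S (S n) + 1) * x0 (S (S n)))) by ring.
    rewrite E. pose proof (S_INR (S n)).
    assert (0 < INR (S (S n))) by (apply lt_0_INR; lia).
    assert (0 < INR (S (S n)) * x0 (S (S n)) ^ n) by (apply Rmult_lt_0_compat; lra).
    nra.
Qed.

Lemma sq_deriv a c : derivable_pt_lim (fun v => (v - a) ^ 2) c (2 * (c - a)).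
Proof.
  assert (H1 : derivable_pt_lim (fun v => v - a) c 1).
  { apply (derivable_pt_lim_ext (id - fct_cte a)%F). { intro; reflexivity. }
    replace 1 with (1 - 0) by ring. apply derivable_pt_lim_minus.
    apply derivable_pt_lim_id. apply derivable_pt_lim_const. }
  pose proof (derivable_pt_lim_comp _ _ _ _ _ H1 (derivable_pt_lim_pow (c - a) 2)) as H2.
  replace (2 * (c - a)) with (INR 2 * (c - a) ^ pred 2 * 1) by (simpl; ring).
  exact H2.
Qed.

Definition Dq k t := (h k t - h k (x0 k)) / (t - x0 k) ^ 2.



Lemma cauchy_step k a b : a < b -> exists c, a < c < b /\
   ((b - x0 k) ^ 2 - (a - x0 k) ^ 2) * hp k c = (h k b - h k a) * (2 * (c - x0 k)).
Proof.
  intros Hab.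
  assert (pr1 : forall c, a < c < b -> derivable_pt (h k) c) by (intros; apply h_derivable).
  assert (pr2 : forall c, a < c < b -> derivable_pt (fun v => (v - x0 k) ^ 2) c)
    by (intros c _; exists (2 * (c - x0 k)); apply sq_deriv).
  destruct (MVT (h k) (fun v => (v - x0 k) ^ 2) a b pr1 pr2 Hab) as [c [P E]].
  - intros; apply derivable_continuous_pt, h_derivable.
  - intros c _. apply derivable_continuous_pt. exists (2 * (c - x0 k)); apply sq_deriv.
  - exists c. split; auto.
    rewrite (derive_pt_eq_0 _ _ _ _ (h_deriv k c)) in E.
    rewrite (derive_pt_eq_0 _ _ _ _ (sq_deriv (x0 k) c)) in E. exact E.
Qed.

Lemma Dq_lim k : (1 <= k)%nat -> forall eps, 0 < eps -> exists d, 0 < d /\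
  forall t, t <> x0 k -> Rabs (t - x0 k) < d -> Rabs (Dq k t - hpp k (x0 k) / 2) < eps.
Proof.
  intros Hk eps He.
  destruct (hp_deriv k (x0 k) (2 * eps) ltac:(lra)) as [d Hd].
  exists d. split; [apply cond_pos|]. intros t Ht1 Ht2.
  assert (Hc : exists c, c <> x0 k /\ Rabs (c - x0 k) < Rabs (t - x0 k) /\
     (t - x0 k) ^ 2 * hp k c = (h k t - h k (x0 k)) * (2 * (c - x0 k))).
  { destruct (Rlt_dec t (x0 k)).
    - destruct (cauchy_step k t (x0 k) r) as [c [Pc E]]. exists c.
      split; [lra|]. split.
      + rewrite !Rabs_left by lra. lra.
      + replace ((x0 k - x0 k) ^ 2) with 0 in E by ring. lra.
    - destruct (cauchy_step k (x0 k) t ltac:(lra)) as [c [Pc E]]. exists c.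
      split; [lra|]. split.
      + rewrite !Rabs_right by lra. lra.
      + replace ((x0 k - x0 k) ^ 2) with 0 in E by ring. lra. }
  destruct Hc as [c [Hc1 [Hc2 Hc3]]].
  specialize (Hd (c - x0 k) ltac:(lra) ltac:(lra)).
  replace (x0 k + (c - x0 k)) with c in Hd by ring.
  rewrite hp_x0 in Hd by auto.
  assert (Dq k t = (hp k c - 0) / (c - x0 k) / 2).
  { unfold Dq. assert (t - x0 k <> 0) by lra. assert (c - x0 k <> 0) by lra.
    assert (hp k c = (h k t - h k (x0 k)) * (2 * (c - x0 k)) / (t - x0 k) ^ 2).
    { rewrite <- Hc3. field. auto. }
    rewrite H1. field. auto. }
  rewrite H.
  replace ((hp k c - 0) / (c - x0 k) / 2 - hpp k (x0 k) / 2)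
    with (((hp k c - 0) / (c - x0 k) - hpp k (x0 k)) / 2) by (field; lra).
  unfold Rdiv at 1. rewrite Rabs_mult, Rabs_inv. rewrite (Rabs_right 2) by lra.
  apply (Rmult_lt_reg_r 2); [lra|]. rewrite Rmult_assoc, Rinv_l by lra. lra.
Qed.


Lemma Dq_mul k t : t <> x0 k -> (t - x0 k) ^ 2 * Dq k t = h k t - h k (x0 k).
Proof. intros H. unfold Dq. field. lra. Qed.

Lemma f_deriv_x0 k f : (1 <= k)%nat -> is_fk k f -> derivable_pt_lim f (x0 k) (-1).
Proof.
  intros Hk Hf eps He. pose proof (x0_bounds k Hk) as X.
  set (L := hpp k (x0 k) / 2).
  assert (HL : L < 0) by (unfold L; pose proof (hpp_x0 k Hk); lra).
  set (eta := Rmin (- L / 2) (eps * (- L) / 8)).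
  assert (Heta : 0 < eta /\ eta <= - L / 2 /\ eta <= eps * (- L) / 8).
  { unfold eta. split; [apply Rmin_glb_lt|split; [apply Rmin_l|apply Rmin_r]].
    lra. apply Rmult_lt_0_compat; [apply Rmult_lt_0_compat|]; lra. }
  destruct Heta as [Heta1 [Heta2 Heta3]].
  destruct (Dq_lim k Hk eta Heta1) as [d1 [Hd1 HD]].
  destruct (f_cont k f (x0 k) Hk Hf X d1 Hd1) as [d2 [Hd2 HC]].
  rewrite (f_x0 k f Hk Hf) in HC.
  set (del := Rmin (Rmin d1 d2) (Rmin (x0 k) (1 - x0 k))).
  assert (Hdel : 0 < del) by (unfold del; repeat apply Rmin_glb_lt; lra).
  exists (mkposreal del Hdel). intros u Hu0 Hu. simpl in Hu.
  assert (Hu' : Rabs u < d1 /\ Rabs u < d2 /\ Rabs u < x0 k /\ Rabs u < 1 - x0 k).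
  { unfold del in Hu.
    pose proof (Rmin_l (Rmin d1 d2) (Rmin (x0 k) (1 - x0 k))).
    pose proof (Rmin_r (Rmin d1 d2) (Rmin (x0 k) (1 - x0 k))).
    pose proof (Rmin_l d1 d2). pose proof (Rmin_r d1 d2).
    pose proof (Rmin_l (x0 k) (1 - x0 k)). pose proof (Rmin_r (x0 k) (1 - x0 k)). lra. }
  destruct Hu' as [Hu1 [Hu2 [Hu3 Hu4]]].
  set (t := x0 k + u). set (y := f t).
  assert (Tdef : t = x0 k + u) by reflexivity.
  assert (Ht : 0 <= t <= 1) by (unfold t; apply Rabs_def2 in Hu3; apply Rabs_def2 in Hu4; lra).
  assert (Htx : t <> x0 k) by (unfold t; lra).
  assert (Hyx : y <> x0 k).
  { intro E. apply Htx. apply (f_inj k f); auto; try lra. fold y. rewrite E, f_x0; auto. }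
  assert (Hsign : u * (y - x0 k) < 0).
  { destruct (Rlt_dec u 0).
    - pose proof (f_side_l k f t Hk Hf ltac:(lra)). fold y in H.
      assert (0 < y - x0 k) by lra. nra.
    - pose proof (f_side_r k f t Hk Hf ltac:(lra)). fold y in H.
      assert (y - x0 k < 0) by lra. assert (0 < u) by lra. nra. }
  assert (Hyd : Rabs (y - x0 k) < d1).
  { apply HC. unfold t. replace (x0 k + u - x0 k) with u by ring. lra. }
  assert (HA := HD t Htx ltac:(unfold t; replace (x0 k + u - x0 k) with u by ring; lra)).
  assert (HB := HD y Hyx Hyd). fold L in HA, HB.
  set (A := Dq k t) in *. set (B := Dq k y) in *.
  assert (Eq : (y - x0 k) ^ 2 * B = u ^ 2 * A).
  { unfold A, B. rewrite Dq_mul by auto.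
    replace u with (t - x0 k) by (unfold t; ring). rewrite Dq_mul by auto.
    unfold y. rewrite (fk_eq k f t Hf Ht). ring. }
  set (r := (y - x0 k) / u).
  assert (Hr : r * r * B = A).
  { unfold r. apply (Rmult_eq_reg_r (u ^ 2)). 2:{ apply pow_nonzero; auto. }
    transitivity ((y - x0 k) ^ 2 * B). { unfold r. field. auto. } rewrite Eq. ring. }
  assert (Hrneg : r < 0).
  { unfold r. assert (0 < u * u) by nra.
    replace ((y - x0 k) / u) with (u * (y - x0 k) / (u * u)) by (field; auto).
    unfold Rdiv. assert (0 < / (u * u)) by (apply Rinv_0_lt_compat; auto). nra. }
  apply Rabs_def2 in HA. apply Rabs_def2 in HB.
  assert (HBneg : B < L / 2) by lra.
  assert (Hrr : Rabs (r * r - 1) <= eps / 2).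
  { assert (E2 : (r * r - 1) * (- B) = B - A) by (rewrite <- Hr; ring).
    assert (Hab : Rabs (B - A) < 2 * eta) by (apply Rabs_def1; lra).
    assert (Rabs (r * r - 1) * (- B) = Rabs (B - A)).
    { rewrite <- E2, Rabs_mult, (Rabs_right (- B)) by lra. auto. }
    assert (Rabs (r * r - 1) * (- L / 2) <= Rabs (r * r - 1) * (- B)).
    { apply Rmult_le_compat_l; [apply Rabs_pos|lra]. }
    assert (Rabs (r * r - 1) * (- L / 2) < eps * (- L) / 4) by lra.
    assert (0 < - L / 2) by lra.
    apply Rlt_le. apply (Rmult_lt_reg_r (- L / 2)); auto.
    replace (eps / 2 * (- L / 2)) with (eps * (- L) / 4) by field. auto. }
  change (Rabs ((y - f (x0 k)) / u - -1) < eps).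
  rewrite (f_x0 k f Hk Hf).
  replace ((y - x0 k) / u - -1) with (r + 1) by (unfold r; field; auto).
  assert (E3 : (r + 1) * (r - 1) = r * r - 1) by ring.
  assert (Rabs (r + 1) * (1 - r) = Rabs (r * r - 1)).
  { rewrite <- E3, Rabs_mult, (Rabs_left (r - 1)) by lra. ring. }
  assert (Rabs (r + 1) <= Rabs (r + 1) * (1 - r)).
  { pose proof (Rabs_pos (r + 1)). nra. }
  lra.
Qed.


Definition fp k f x := if Req_dec_T x (x0 k) then -1 else hp k x / hp k (f x).

Lemma f_deriv k f x : (1 <= k)%nat -> is_fk k f -> 0 < x < 1 -> derivable_pt_lim f x (fp k f x).
Proof.
  intros Hk Hf Hx. unfold fp. destruct (Req_dec_T x (x0 k)) as [->|Hn].
  - apply f_deriv_x0; auto.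
  - apply f_deriv_gen; auto.
Qed.

Definition gp k f z := - (/ f (exp (- z)) * (fp k f (exp (- z)) * (exp (- z) * -1))).

Lemma g_deriv k f z : (1 <= k)%nat -> is_fk k f -> 0 < z -> derivable_pt_lim (gk f) z (gp k f z).
Proof.
  intros Hk Hf Hz.
  assert (Hx : 0 < exp (- z) < 1).
  { split; [apply exp_pos|]. rewrite <- exp_0. apply exp_increasing. lra. }
  assert (D1 : derivable_pt_lim (fun z => - z) z (-1)).
  { apply (derivable_pt_lim_ext (- id)%F). { intro; reflexivity. }
    apply derivable_pt_lim_opp, derivable_pt_lim_id. }
  pose proof (derivable_pt_lim_comp _ _ _ _ _ D1 (derivable_pt_lim_exp (- z))) as D2.
  pose proof (derivable_pt_lim_comp _ _ _ _ _ D2 (f_deriv k f (exp (- z)) Hk Hf Hx)) as D3.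
  pose proof (f_pos k f (exp (- z)) Hk Hf Hx) as Fp.
  pose proof (derivable_pt_lim_comp _ _ _ _ _ D3 (derivable_pt_lim_ln _ (proj1 Fp))) as D4.
  pose proof (derivable_pt_lim_opp _ _ _ D4) as D5.
  apply (derivable_pt_lim_ext _ _ _ _ (fun _ => eq_refl) D5).
Qed.


Lemma ln_le_m1 t : 0 < t -> ln t <= t - 1.
Proof. intros Ht. pose proof (exp_ineq1_le (ln t)). rewrite exp_ln in H; lra. Qed.

Lemma mln_le y : 0 < y -> - ln y <= (1 - y) / y.
Proof.
  intros Hy. rewrite <- ln_Rinv by auto.
  pose proof (ln_le_m1 (/ y) (Rinv_0_lt_compat _ Hy)).
  replace ((1 - y) / y) with (/ y - 1) by (field; lra). auto.
Qed.

Lemma pow_le1 x n : 0 <= x <= 1 -> x ^ n <= 1.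
Proof.
  intros Hx. induction n; simpl; [lra|].
  assert (0 <= x ^ n) by (apply pow_le; lra). nra.
Qed.

Lemma bernoulli y n : 0 <= y <= 1 -> 1 - INR n * (1 - y) <= y ^ n.
Proof.
  intros Hy. induction n as [|n IH].
  - simpl. lra.
  - rewrite S_INR. simpl.
    assert (0 <= y ^ n) by (apply pow_le; lra).
    assert (y ^ n <= 1) by (apply pow_le1; lra).
    pose proof (pos_INR n). nra.
Qed.

Lemma exp_pow_n n a : exp (INR n * a) = exp a ^ n.
Proof.
  induction n as [|n IH].
  - simpl. rewrite Rmult_0_l. apply exp_0.
  - rewrite S_INR. simpl. rewrite <- IH, <- exp_plus. f_equal. ring.
Qed.

Lemma h_form k t : h k t = t ^ k * (1 - t).
Proof. unfold h. rewrite pow_add. simpl. ring. Qed.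

Lemma pow_le_self x k : (1 <= k)%nat -> 0 <= x <= 1 -> x ^ k <= x.
Proof.
  intros Hk Hx. destruct k as [|m]; [lia|]. simpl.
  assert (x ^ m <= 1) by (apply pow_le1; lra). nra.
Qed.

Lemma part_a k f : (1 <= k)%nat -> is_fk k f ->
  equiv_at_infty (gk f) (fun z => exp (- INR k * z)).
Proof.
  intros Hk Hf eps He. pose proof (x0_bounds k Hk) as X.
  set (c := x0 k ^ k).
  assert (Hc : 0 < c) by (apply pow_lt; lra).
  pose proof (INRk1_pos k) as K1.
  set (del := Rmin (Rmin (x0 k) eps) (c * eps / ((1 + eps) * INR (k + 1)))).
  assert (Hdel : 0 < del /\ del <= x0 k /\ del <= eps /\ del <= c * eps / ((1 + eps) * INR (k + 1))).
  { unfold del. pose proof (Rmin_l (Rmin (x0 k) eps) (c * eps / ((1 + eps) * INR (k + 1)))).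
    pose proof (Rmin_r (Rmin (x0 k) eps) (c * eps / ((1 + eps) * INR (k + 1)))).
    pose proof (Rmin_l (x0 k) eps). pose proof (Rmin_r (x0 k) eps).
    split; [|lra]. repeat apply Rmin_glb_lt; try lra.
    apply Rdiv_lt_0_compat; [nra|]. apply Rmult_lt_0_compat; lra. }
  destruct Hdel as [Hd1 [Hd2 [Hd3 Hd4]]].
  exists (Rmax 0 (- ln del)). intros z Hz.
  pose proof (Rmax_l 0 (- ln del)). pose proof (Rmax_r 0 (- ln del)).
  set (x := exp (- z)).
  assert (Hx : 0 < x < del).
  { unfold x. split; [apply exp_pos|]. rewrite <- (exp_ln del) by auto.
    apply exp_increasing. lra. }
  assert (Hx01 : 0 < x < 1) by lra.
  set (y := f x).
  assert (Hy : 0 < y < 1) by (apply (f_pos k f x Hk Hf Hx01)).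
  assert (Hyx0 : x0 k <= y) by (apply (f_side_l k f x Hk Hf); lra).
  assert (HE : y ^ k * (1 - y) = x ^ k * (1 - x)).
  { rewrite <- !h_form. apply (fk_eq k f x Hf). lra. }
  replace (exp (- INR k * z)) with (x ^ k).
  2:{ unfold x. rewrite <- exp_pow_n. f_equal. ring. }
  unfold gk. fold x. fold y.
  set (Xk := x ^ k) in *. set (Yk := y ^ k) in *.
  assert (HX : 0 < Xk) by (apply pow_lt; lra).
  assert (HXx : Xk <= x) by (apply pow_le_self; auto; lra).
  assert (HY : c <= Yk) by (apply pow_incr; lra).
  assert (HY1 : Yk <= 1) by (apply pow_le1; lra).
  assert (E1 : 1 - y = Xk * (1 - x) / Yk) by (rewrite <- HE; field; lra).
  assert (Lo : (1 - eps) * Xk < - ln y).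
  { pose proof (ln_le_m1 y (proj1 Hy)).
    assert (Xk * (1 - x) <= Xk * (1 - x) / Yk).
    { apply (Rmult_le_reg_r Yk); [lra|].
      replace (Xk * (1 - x) / Yk * Yk) with (Xk * (1 - x)) by (field; lra).
      assert (0 < Xk * (1 - x)) by (apply Rmult_lt_0_compat; lra). nra. }
    assert ((1 - eps) * Xk < Xk * (1 - x)) by nra. lra. }
  assert (Hyk1 : 1 / (1 + eps) < y ^ (k + 1)).
  { pose proof (bernoulli y (k + 1) ltac:(lra)).
    assert (1 - y <= x / c).
    { rewrite E1. apply (Rmult_le_reg_r Yk); [lra|].
      replace (Xk * (1 - x) / Yk * Yk) with (Xk * (1 - x)) by (field; lra).
      unfold Rdiv.
      assert (x * / c * Yk >= x) .
      { assert (x * / c * Yk >= x * / c * c) by (apply Rmult_ge_compat_l; [|lra];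
          apply Rle_ge; apply Rmult_le_pos; [lra|apply Rlt_le, Rinv_0_lt_compat; auto]).
        replace (x * / c * c) with x in H2 by (field; lra). auto. }
      nra. }
    assert (INR (k + 1) * (1 - y) <= INR (k + 1) * (x / c)) by (apply Rmult_le_compat_l; lra).
    assert (INR (k + 1) * (x / c) < eps / (1 + eps)).
    { assert (x < c * eps / ((1 + eps) * INR (k + 1))) by lra.
      apply (Rmult_lt_reg_r c); auto.
      replace (INR (k + 1) * (x / c) * c) with (INR (k + 1) * x) by (field; lra).
      apply (Rmult_lt_reg_r ((1 + eps))); [lra|].
      replace (eps / (1 + eps) * c * (1 + eps)) with (c * eps) by (field; lra).
      assert (x * ((1 + eps) * INR (k + 1)) < c * eps).
      { apply (Rmult_lt_reg_r (/ ((1 + eps) * INR (k + 1)))).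
        apply Rinv_0_lt_compat; apply Rmult_lt_0_compat; lra.
        rewrite Rmult_assoc, Rinv_r by (apply Rgt_not_eq, Rmult_lt_0_compat; lra). lra. }
      lra. }
    replace (1 / (1 + eps)) with (1 - eps / (1 + eps)) by (field; lra). lra. }
  assert (Up : - ln y < (1 + eps) * Xk).
  { pose proof (mln_le y (proj1 Hy)).
    assert (Ey : y ^ (k + 1) = Yk * y) by (unfold Yk; rewrite pow_add; simpl; ring).
    assert ((1 - y) / y <= Xk / (Yk * y)).
    { rewrite E1. unfold Rdiv. rewrite Rinv_mult.
      assert (0 < / y) by (apply Rinv_0_lt_compat; lra).
      assert (0 < / Yk) by (apply Rinv_0_lt_compat; lra).
      assert (0 <= Xk * x) by nra.
      assert (Xk * (1 - x) <= Xk) by nra.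
      replace (Xk * (/ Yk * / y)) with (Xk * / Yk * / y) by ring.
      apply Rmult_le_compat_r; [lra|]. apply Rmult_le_compat_r; lra. }
    assert (Xk / (Yk * y) < (1 + eps) * Xk).
    { rewrite <- Ey. assert (Hp : 0 < y ^ (k + 1)) by (apply pow_lt; lra).
      apply (Rmult_lt_reg_r (y ^ (k + 1))); [lra|].
      replace (Xk / y ^ (k + 1) * y ^ (k + 1)) with Xk by (field; lra).
      assert (1 < (1 + eps) * y ^ (k + 1)).
      { apply (Rmult_lt_reg_l (/ (1 + eps))). apply Rinv_0_lt_compat; lra.
        rewrite <- Rmult_assoc, Rinv_l, Rmult_1_l, Rmult_1_r by lra.
        replace (/ (1 + eps)) with (1 / (1 + eps)) by (field; lra). lra. }
      nra. }
    lra. }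
  apply Rabs_def1.
  - apply (Rmult_lt_reg_r Xk); auto. replace ((- ln y / Xk - 1) * Xk) with (- ln y - Xk) by (field; lra). nra.
  - apply (Rmult_lt_reg_r Xk); auto. replace ((- ln y / Xk - 1) * Xk) with (- ln y - Xk) by (field; lra). nra.
Qed.


Lemma ln_le' a b : 0 < a -> a <= b -> ln a <= ln b.
Proof. intros Ha Hab. destruct (Req_dec a b) as [->|Hn]; [lra|]. apply Rlt_le, ln_increasing; lra. Qed.

Lemma exp_bounds z : 0 < z -> z * exp (- z) <= 1 - exp (- z) <= z.
Proof.
  intros Hz. pose proof (exp_ineq1_le (- z)). pose proof (exp_ineq1_le z).
  split; [|lra].
  assert (exp z * exp (- z) = 1) by (rewrite <- exp_plus; replace (z + - z) with 0 by ring; apply exp_0).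
  pose proof (exp_pos (- z)). nra.
Qed.

Lemma x_gt_x0 k z : (1 <= k)%nat -> 0 < z < - ln (x0 k) -> x0 k < exp (- z).
Proof.
  intros Hk Hz. pose proof (x0_bounds k Hk). rewrite <- (exp_ln (x0 k)) by lra.
  apply exp_increasing. lra.
Qed.

Lemma part_b k f : (1 <= k)%nat -> is_fk k f ->
  equiv_at_0plus (gk f) (fun z => / INR k * ln (/ z)).
Proof.
  intros Hk Hf eps He. pose proof (x0_bounds k Hk) as X.
  pose proof (INRk1_pos k) as K1.
  assert (Kp : 0 < INR k) by (apply lt_0_INR; lia).
  assert (EK : INR (k + 1) = INR k + 1) by (rewrite plus_INR; simpl; ring).
  assert (Z0 : 0 < - ln (x0 k)) by (assert (ln (x0 k) < 0) by (rewrite <- ln_1; apply ln_increasing; lra); lra).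
  set (B := ln (INR (k + 1)) + INR k + 1).
  assert (HB : 0 < B).
  { unfold B. assert (0 <= ln (INR (k + 1))) by (rewrite <- ln_1; apply ln_le'; lra). lra. }
  set (d := Rmin (Rmin 1 (- ln (x0 k))) (exp (- (B / eps)))).
  assert (Hd : 0 < d /\ d <= 1 /\ d <= - ln (x0 k) /\ d <= exp (- (B / eps))).
  { unfold d. pose proof (Rmin_l (Rmin 1 (- ln (x0 k))) (exp (- (B / eps)))).
    pose proof (Rmin_r (Rmin 1 (- ln (x0 k))) (exp (- (B / eps)))).
    pose proof (Rmin_l 1 (- ln (x0 k))). pose proof (Rmin_r 1 (- ln (x0 k))).
    split; [|lra]. repeat apply Rmin_glb_lt; try lra. apply exp_pos. }
  destruct Hd as [Hd1 [Hd2 [Hd3 Hd4]]].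
  exists d. split; auto. intros z Hz.
  set (x := exp (- z)).
  assert (Hx : x0 k < x) by (apply x_gt_x0; auto; lra).
  assert (Hx1 : x < 1) by (unfold x; rewrite <- exp_0; apply exp_increasing; lra).
  assert (Hx01 : 0 < x < 1) by lra.
  set (y := f x).
  assert (Hy : 0 < y < 1) by (apply (f_pos k f x Hk Hf Hx01)).
  assert (Hyx0 : y <= x0 k) by (apply (f_side_r k f x Hk Hf); lra).
  assert (HE : y ^ k * (1 - y) = x ^ k * (1 - x)).
  { rewrite <- !h_form. apply (fk_eq k f x Hf). lra. }
  assert (HL : INR k * ln y + ln (1 - y) = - INR k * z + ln (1 - x)).
  { rewrite <- ln_pow by lra. rewrite <- ln_mult by (try apply pow_lt; lra).
    rewrite HE. rewrite ln_mult by (try apply pow_lt; lra). rewrite ln_pow by lra.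
    unfold x. rewrite ln_exp. ring. }
  pose proof (exp_bounds z (proj1 Hz)) as EB. fold x in EB.
  assert (Hq : - z <= ln ((1 - x) / z) <= 0).
  { split.
    - rewrite <- (ln_exp (- z)). apply ln_le'. apply exp_pos.
      apply (Rmult_le_reg_r z); [lra|]. fold x. replace ((1 - x) / z * z) with (1 - x) by (field; lra). lra.
    - rewrite <- ln_1. apply ln_le'. apply Rdiv_lt_0_compat; lra.
      apply (Rmult_le_reg_r z); [lra|]. replace ((1 - x) / z * z) with (1 - x) by (field; lra). lra. }
  assert (Hl1 : - ln (INR (k + 1)) <= ln (1 - y) <= 0).
  { split.
    - rewrite <- ln_Rinv by lra. apply ln_le'. apply Rinv_0_lt_compat; lra.
      unfold x0 in Hyx0. replace (/ INR (k + 1)) with (1 - INR k / INR (k + 1)) by (rewrite EK; field; lra). lra.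
    - rewrite <- ln_1. apply ln_le'; lra. }
  assert (Hlnz : ln (1 - x) = ln z + ln ((1 - x) / z)).
  { rewrite <- ln_mult by (try apply Rdiv_lt_0_compat; lra). f_equal. field. lra. }
  assert (Hlz : B / eps < - ln z).
  { assert (ln z < ln (exp (- (B / eps)))) by (apply ln_increasing; lra).
    rewrite ln_exp in H. lra. }
  assert (Hlzp : 0 < - ln z) by (assert (0 < B / eps) by (apply Rdiv_lt_0_compat; lra); lra).
  unfold gk. fold x. fold y.
  rewrite ln_Rinv by lra.
  set (N := ln (1 - y) + INR k * z - ln ((1 - x) / z)).
  assert (HN : Rabs N <= B).
  { unfold N, B. apply Rabs_le. assert (INR k * z <= INR k) by nra. assert (0 <= INR k * z) by nra. lra. }
  assert (Ely : ln y = (- INR k * z + (ln z + ln ((1 - x) / z)) - ln (1 - y)) / INR k).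
  { rewrite Hlnz in HL. apply (Rmult_eq_reg_l (INR k)); [|lra].
    replace (INR k * ((- INR k * z + (ln z + ln ((1 - x) / z)) - ln (1 - y)) / INR k))
      with (- INR k * z + (ln z + ln ((1 - x) / z)) - ln (1 - y)) by (field; lra). lra. }
  replace (- ln y / (/ INR k * - ln z) - 1) with (N / (- ln z)).
  2:{ rewrite Ely. unfold N. field. lra. }
  unfold Rdiv. rewrite Rabs_mult, Rabs_inv, (Rabs_right (- ln z)) by lra.
  apply (Rmult_lt_reg_r (- ln z)); auto. rewrite Rmult_assoc, Rinv_l, Rmult_1_r by lra.
  assert (B < eps * - ln z).
  { apply (Rmult_lt_reg_l (/ eps)). apply Rinv_0_lt_compat; lra.
    rewrite <- Rmult_assoc, Rinv_l, Rmult_1_l by lra. unfold Rdiv in Hlz. lra. }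
  lra.
Qed.


Lemma prod_bounds a b c e w eps : 0 < eps -> 0 <= w -> w * (1 + eps) < eps ->
  1 <= a -> 1 <= e -> 0 <= b -> 0 <= c -> b <= 1 -> c <= 1 -> 1 - w <= b * c ->
  (a * e) * (1 - w) <= 1 -> Rabs (a * b * c * e - 1) < eps.
Proof.
  intros He Hw Hwe Ha He1 Hb Hc Hb1 Hc1 Hbc Hae.
  assert (Hw1 : w < 1) by nra.
  assert (1 <= a * e) by nra.
  assert (0 <= b * c) by nra.
  assert (Lo : 1 - w <= a * b * c * e).
  { replace (a * b * c * e) with ((a * e) * (b * c)) by ring. nra. }
  assert (Up : a * b * c * e <= a * e).
  { replace (a * b * c * e) with ((a * e) * (b * c)) by ring.
    assert (b * c <= 1) by nra. nra. }
  assert (a * e < 1 + eps).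
  { set (q := (1 - w) * (1 + eps)).
    assert (Hq : 1 < q) by (unfold q; nra).
    assert (0 < a * e * (q - 1)) by (apply Rmult_lt_0_compat; lra).
    assert (a * e < a * e * q) by (replace (a * e * q) with (a * e + a * e * (q - 1)) by ring; lra).
    assert (a * e * q <= 1 + eps).
    { unfold q. replace (a * e * ((1 - w) * (1 + eps))) with ((a * e * (1 - w)) * (1 + eps)) by ring.
      nra. }
    lra. }
  assert (w < eps) by nra.
  apply Rabs_def1; lra.
Qed.

Lemma part_c k f : (1 <= k)%nat -> is_fk k f ->
  equiv_at_0plus (gp k f) (fun z => - / (INR k * z)).
Proof.
  intros Hk Hf eps He. pose proof (x0_bounds k Hk) as X.
  pose proof (INRk1_pos k) as K1.
  assert (Kp : 1 <= INR k) by (apply (le_INR 1); lia).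
  assert (EK : INR (k + 1) = INR k + 1) by (rewrite plus_INR; simpl; ring).
  assert (Z0 : 0 < - ln (x0 k)) by (assert (ln (x0 k) < 0) by (rewrite <- ln_1; apply ln_increasing; lra); lra).
  set (eta := eps / (2 * (1 + eps) * INR (k + 1))).
  assert (Heta : 0 < eta) by (unfold eta; apply Rdiv_lt_0_compat; [lra|]; apply Rmult_lt_0_compat; lra).
  assert (Heta2 : 2 * eta * INR (k + 1) * (1 + eps) = eps) by (unfold eta; field; lra).
  assert (Hetak : 0 < eta ^ k) by (apply pow_lt; lra).
  set (d := Rmin (Rmin (- ln (x0 k)) (1/2)) (Rmin eta (eta ^ k / INR (k + 1)))).
  assert (Hd : 0 < d /\ d <= - ln (x0 k) /\ d <= 1/2 /\ d <= eta /\ d <= eta ^ k / INR (k + 1)).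
  { unfold d.
    pose proof (Rmin_l (Rmin (- ln (x0 k)) (1/2)) (Rmin eta (eta ^ k / INR (k + 1)))).
    pose proof (Rmin_r (Rmin (- ln (x0 k)) (1/2)) (Rmin eta (eta ^ k / INR (k + 1)))).
    pose proof (Rmin_l (- ln (x0 k)) (1/2)). pose proof (Rmin_r (- ln (x0 k)) (1/2)).
    pose proof (Rmin_l eta (eta ^ k / INR (k + 1))). pose proof (Rmin_r eta (eta ^ k / INR (k + 1))).
    split; [|lra]. repeat apply Rmin_glb_lt; try lra. apply Rdiv_lt_0_compat; lra. }
  destruct Hd as [Hd1 [Hd2 [Hd3 [Hd4 Hd5]]]].
  exists d. split; auto. intros z Hz.
  set (x := exp (- z)).
  assert (Hx : x0 k < x) by (apply x_gt_x0; auto; lra).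
  assert (Hx1 : x < 1) by (unfold x; rewrite <- exp_0; apply exp_increasing; lra).
  assert (Hx01 : 0 < x < 1) by lra.
  set (y := f x).
  assert (Hy : 0 < y < 1) by (apply (f_pos k f x Hk Hf Hx01)).
  assert (Hyx0 : y <= x0 k) by (apply (f_side_r k f x Hk Hf); lra).
  assert (HE : y ^ k * (1 - y) = x ^ k * (1 - x)).
  { rewrite <- !h_form. apply (fk_eq k f x Hf). lra. }
  pose proof (exp_bounds z (proj1 Hz)) as EB. fold x in EB.
  assert (H1y : / INR (k + 1) <= 1 - y).
  { unfold x0 in Hyx0. replace (/ INR (k + 1)) with (1 - INR k / INR (k + 1)) by (rewrite EK; field; lra). lra. }
  assert (Hyeta : y < eta).
  { destruct (Rlt_dec y eta) as [|Hn]; auto. exfalso.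
    assert (eta ^ k <= y ^ k) by (apply pow_incr; lra).
    assert (x ^ k * (1 - x) <= 1 - x).
    { assert (x ^ k <= 1) by (apply pow_le1; lra). nra. }
    assert (y ^ k * / INR (k + 1) <= y ^ k * (1 - y)).
    { apply Rmult_le_compat_l; [apply pow_le; lra|lra]. }
    assert (z < eta ^ k / INR (k + 1)) by lra.
    assert (z * INR (k + 1) < eta ^ k).
    { apply (Rmult_lt_reg_r (/ INR (k + 1))). apply Rinv_0_lt_compat; lra.
      rewrite Rmult_assoc, Rinv_r, Rmult_1_r by lra. auto. }
    assert (y ^ k <= z * INR (k + 1)).
    { assert (y ^ k * / INR (k + 1) <= z) by lra.
      apply (Rmult_le_reg_r (/ INR (k + 1))). apply Rinv_0_lt_compat; lra.
      rewrite Rmult_assoc, Rinv_r, Rmult_1_r by lra. auto. }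
    lra. }
  set (w := INR (k + 1) * (z + y)).
  assert (Hw0 : 0 <= w) by (unfold w; apply Rmult_le_pos; lra).
  assert (Hw : w * (1 + eps) < eps).
  { unfold w.
    assert (z + y < 2 * eta) by lra.
    assert (INR (k + 1) * (z + y) < INR (k + 1) * (2 * eta)) by (apply Rmult_lt_compat_l; lra).
    assert (INR (k + 1) * (z + y) * (1 + eps) < INR (k + 1) * (2 * eta) * (1 + eps))
      by (apply Rmult_lt_compat_r; lra).
    lra. }
  assert (Hky : INR (k + 1) * y < 1 / 2).
  { assert (INR (k + 1) * y < INR (k + 1) * eta) by (apply Rmult_lt_compat_l; lra).
    assert (INR (k + 1) * eta = eps / (2 * (1 + eps))) by (unfold eta; field; lra).
    assert (eps / (2 * (1 + eps)) < 1 / 2).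
    { apply (Rmult_lt_reg_r (2 * (1 + eps))); [lra|].
      replace (eps / (2 * (1 + eps)) * (2 * (1 + eps))) with eps by (field; lra). lra. }
    lra. }
  assert (Hkz : INR (k + 1) * z < 1 / 2).
  { assert (INR (k + 1) * z < INR (k + 1) * eta) by (apply Rmult_lt_compat_l; lra).
    assert (INR (k + 1) * eta = eps / (2 * (1 + eps))) by (unfold eta; field; lra).
    assert (eps / (2 * (1 + eps)) < 1 / 2).
    { apply (Rmult_lt_reg_r (2 * (1 + eps))); [lra|].
      replace (eps / (2 * (1 + eps)) * (2 * (1 + eps))) with eps by (field; lra). lra. }
    lra. }
  set (a := z / (1 - x)). set (b := INR (k + 1) * x - INR k). set (c := 1 - y).
  set (e := INR k / (INR k - INR (k + 1) * y)).
  assert (Hden : 0 < INR k - INR (k + 1) * y) by lra.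
  assert (Ha1 : 1 <= a).
  { unfold a. apply (Rmult_le_reg_r (1 - x)); [lra|].
    replace (z / (1 - x) * (1 - x)) with z by (field; lra). lra. }
  assert (Ha2 : a * (1 - z) <= 1).
  { unfold a. assert (z * (1 - z) <= 1 - x).
    { pose proof (exp_ineq1_le (- z)). fold x in H. nra. }
    apply (Rmult_le_reg_r (1 - x)); [lra|].
    replace (z / (1 - x) * (1 - z) * (1 - x)) with (z * (1 - z)) by (field; lra). lra. }
  assert (He1 : 1 <= e).
  { unfold e. apply (Rmult_le_reg_r (INR k - INR (k + 1) * y)); auto.
    replace (INR k / (INR k - INR (k + 1) * y) * (INR k - INR (k + 1) * y)) with (INR k) by (field; lra).
    assert (0 <= INR (k + 1) * y) by (apply Rmult_le_pos; lra). lra. }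
  assert (He2 : e * (1 - INR (k + 1) * y) <= 1).
  { unfold e. apply (Rmult_le_reg_r (INR k - INR (k + 1) * y)); auto.
    replace (INR k / (INR k - INR (k + 1) * y) * (1 - INR (k + 1) * y) * (INR k - INR (k + 1) * y))
      with (INR k * (1 - INR (k + 1) * y)) by (field; lra).
    assert (0 <= INR (k + 1) * y) by (apply Rmult_le_pos; lra). nra. }
  assert (Hb0 : 1 - INR (k + 1) * z <= b).
  { unfold b. pose proof (exp_ineq1_le (- z)). fold x in H. rewrite EK. nra. }
  assert (Hb1 : b <= 1) by (unfold b; rewrite EK; nra).
  assert (Hbc : 1 - w <= b * c).
  { unfold c, w. assert (0 <= INR (k + 1) * y) by (apply Rmult_le_pos; lra).
    assert ((1 - INR (k + 1) * z) * (1 - y) <= b * (1 - y)) by (apply Rmult_le_compat_r; lra).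
    assert (0 <= INR (k + 1) * z * y) by (apply Rmult_le_pos; [apply Rmult_le_pos|]; lra).
    assert (y <= INR (k + 1) * y) by nra. nra. }
  assert (Hae : a * e * (1 - w) <= 1).
  { assert ((1 - w) <= (1 - z) * (1 - INR (k + 1) * y)).
    { unfold w. assert (0 <= z * (INR (k + 1) * y)) by (apply Rmult_le_pos; [|apply Rmult_le_pos]; lra).
      assert (z <= INR (k + 1) * z) by nra. nra. }
    assert (0 <= a * e) by nra.
    assert (a * e * (1 - w) <= a * e * ((1 - z) * (1 - INR (k + 1) * y))) by (apply Rmult_le_compat_l; lra).
    replace (a * e * ((1 - z) * (1 - INR (k + 1) * y))) with ((a * (1 - z)) * (e * (1 - INR (k + 1) * y))) in H1 by ring.
    assert (0 <= a * (1 - z)) by nra.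
    assert (0 <= e * (1 - INR (k + 1) * y)) by nra.
    assert ((a * (1 - z)) * (e * (1 - INR (k + 1) * y)) <= 1 * 1) by (apply Rmult_le_compat; lra).
    lra. }
  replace (gp k f z / - / (INR k * z)) with (a * b * c * e).
  - apply (prod_bounds a b c e w eps); auto; unfold c; lra.
  - unfold gp. fold x. fold y. unfold fp.
    destruct (Req_dec_T x (x0 k)) as [Ex|Ex]; [lra|].
    rewrite !hp_factor by auto.
    assert (Epx : x ^ k = x ^ pred k * x) by (destruct k; [lia|]; simpl; ring).
    assert (Epy : y ^ k = y ^ pred k * y) by (destruct k; [lia|]; simpl; ring).
    assert (Px : 0 < x ^ pred k) by (apply pow_lt; lra).
    assert (Py : 0 < y ^ pred k) by (apply pow_lt; lra).
    rewrite Epx, Epy in HE.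
    assert (Eyy : y ^ pred k * y = x ^ pred k * x * (1 - x) / (1 - y)) by (rewrite <- HE; field; lra).
    assert (Hkx : INR k - INR (k + 1) * x <> 0).
    { unfold x0 in Hx. assert (INR (k + 1) * (INR k / INR (k + 1)) < INR (k + 1) * x)
        by (apply Rmult_lt_compat_l; lra).
      replace (INR (k + 1) * (INR k / INR (k + 1))) with (INR k) in H by (field; lra). lra. }
    unfold a, b, c, e.
    fold y.
    assert (Epy2 : y ^ pred k = x ^ pred k * x * (1 - x) / (1 - y) / y).
    { rewrite <- Eyy. field. lra. }
    rewrite Epy2. field. repeat split; try lra.
Qed.


Theorem mainTheorem10 (k : nat) (f : R -> R) :
  (1 <= k)%nat -> is_fk k f ->
  equiv_at_infty (gk f) (fun z => exp (- INR k * z)) /\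
  equiv_at_0plus (gk f) (fun z => / INR k * ln (/ z)) /\
  exists g' : R -> R,
    (forall z, 0 < z -> derivable_pt_lim (gk f) z (g' z)) /\
    equiv_at_0plus g' (fun z => - / (INR k * z)).
Proof.
  intros Hk Hf. split; [apply part_a; auto|]. split; [apply part_b; auto|].
  exists (gp k f). split.
  - intros z Hz. apply g_deriv; auto.
  - apply part_c; auto.
Qed.
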